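(* Let $G$ be a crossing closed graph on $[n]$. Then $G$ is upper crossing closed if and only if $G$ contains no obstruction as a subgraph.
   Context: Graphs are finite simple graphs with vertex set $[n]$; edges are written $ij$ with $i<j$. Two edges $a_1a_2$ and $b_1b_2$ cross if $a_1<b_1<a_2<b_2$ or $b_1<a_1<b_2<a_2$. Two crossing edges $e,f$ are crossing closed if among all induced connected subgraphs of $G$ containing $e$ and $f$ there is a unique minimal one under containment, denoted $J(e,f)$; $G$ is crossing closed if all pairs of crossing edges are. $G$ is upper crossing closed if it is crossing closed and there is a total order $\unlhd$ on $E(G)$ such that for every pair of crossing edges $e,f$, $J(e,f)$ contains an edge $h$ with $h\lhd e$ and $h\lhd f$. For crossing closed $G$, a subgraph $H$ of $G$ is an obstruction if for every edge $e$ of $H$ there is an edge $f$ of $H$ crossing $e$ with $J(e,f)\subseteq H$. *)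

(* Defs.v *)
From mathcomp Require Import all_boot all_order.
Set Implicit Arguments. Unset Strict Implicit. Unset Printing Implicit Defensive.

(* Vertex set [n] is 'I_n (with its natural order); an edge ij (i<j) is the pair (i,j). *)
Definition edge n := ('I_n * 'I_n)%type.

Definition simple_graph n (E : {set edge n}) : Prop :=
  forall e, e \in E -> (e.1 < e.2)%N.

Definition cross n (e f : edge n) : bool :=
  ((e.1 < f.1) && (f.1 < e.2) && (e.2 < f.2))%N ||
  ((f.1 < e.1) && (e.1 < f.2) && (f.2 < e.2))%N.

Definition adj n (E : {set edge n}) (x y : 'I_n) : bool :=
  ((x, y) \in E) || ((y, x) \in E).

Definition in_induced n (E : {set edge n}) (S : {set 'I_n}) (h : edge n) : bool :=
  [&& h \in E, h.1 \in S & h.2 \in S].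

Definition induced_connected n (E : {set edge n}) (S : {set 'I_n}) : Prop :=
  S != set0 /\
  forall x y, x \in S -> y \in S ->
    connect (fun u v => [&& u \in S, v \in S & adj E u v]) x y.

Definition candidate n (E : {set edge n}) (e f : edge n) (S : {set 'I_n}) : Prop :=
  in_induced E S e /\ in_induced E S f /\ induced_connected E S.

(* S is a minimal such subgraph (induced subgraphs are ordered by their vertex sets). *)
Definition minimal_candidate n (E : {set edge n}) (e f : edge n) (S : {set 'I_n}) : Prop :=
  candidate E e f S /\ forall T, candidate E e f T -> T \subset S -> T = S.

Definition isJ n (E : {set edge n}) (e f : edge n) (S : {set 'I_n}) : Prop :=
  minimal_candidate E e f S /\ forall T, minimal_candidate E e f T -> T = S.

Definition crossing_closed_pair n (E : {set edge n}) (e f : edge n) : Prop :=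
  exists S, isJ E e f S.

Definition crossing_closed n (E : {set edge n}) : Prop :=
  forall e f, e \in E -> f \in E -> cross e f -> crossing_closed_pair E e f.

Definition total_order_on n (E : {set edge n}) (le : rel (edge n)) : Prop :=
  (forall e, e \in E -> le e e) /\
  (forall e f, e \in E -> f \in E -> le e f -> le f e -> e = f) /\
  (forall e f g, e \in E -> f \in E -> g \in E -> le e f -> le f g -> le e g) /\
  (forall e f, e \in E -> f \in E -> le e f || le f e).

Definition upper_crossing_closed n (E : {set edge n}) : Prop :=
  crossing_closed E /\
  exists le : rel (edge n), total_order_on E le /\
    forall e f, e \in E -> f \in E -> cross e f ->
      forall S, isJ E e f S ->
        exists h, [/\ in_induced E S h,
                      le h e && (h != e) & le h f && (h != f)].

Definition subgraph n (E : {set edge n}) (VH : {set 'I_n}) (EH : {set edge n}) : Prop :=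
  EH \subset E /\ forall h, h \in EH -> (h.1 \in VH) && (h.2 \in VH).

Definition induced_sub n (E : {set edge n}) (S VH : {set 'I_n}) (EH : {set edge n}) : Prop :=
  S \subset VH /\ forall h, in_induced E S h -> h \in EH.

(* Obstruction (taken nonempty: at least one edge). *)
Definition obstruction n (E : {set edge n}) (VH : {set 'I_n}) (EH : {set edge n}) : Prop :=
  subgraph E VH EH /\ EH != set0 /\
  forall e, e \in EH -> exists f, [/\ f \in EH, cross e f &
     forall S, isJ E e f S -> induced_sub E S VH EH].

(* Main.v *)
Require Import Defs.
From mathcomp Require Import all_boot all_order.
From Stdlib Require Import Classical.

Set Implicit Arguments. Unset Strict Implicit. Unset Printing Implicit Defensive.

Lemma index_cons_eq (T : eqType) (x y : T) s :
  index x (y :: s) = if y == x then 0 else (index x s).+1.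
Proof. by []. Qed.

Lemma cross_sym n (e f : edge n) : cross e f = cross f e.
Proof. by rewrite /cross orbC. Qed.

Lemma isJ_sym n (E : {set edge n}) e f S : isJ E e f S -> isJ E f e S.
Proof.
have cs : forall T, candidate E f e T -> candidate E e f T.
  by move=> T [a [b c]].
have ms : forall T, minimal_candidate E f e T -> minimal_candidate E e f T.
  move=> T [c m]; split; first exact: cs.
  move=> T' c' sub; apply: m => //; move: c' => [a [b d]]; by [].
have ms' : forall T, minimal_candidate E e f T -> minimal_candidate E f e T.
  move=> T [c m]; split; first by move: c => [a [b d]].
  move=> T' c' sub; apply: m => //; exact: cs.
move=> [m u]; split; first exact: ms'.
move=> T mT; apply: u; exact: ms.
Qed.

Lemma isJ_uniq n (E : {set edge n}) e f S T : isJ E e f S -> isJ E e f T -> T = S.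
Proof. by move=> [_ u] [m _]; apply: u. Qed.

Section Build.
Variables (n : nat) (E : {set edge n}).
Hypothesis cc : crossing_closed E.
Hypothesis noobs : ~ (exists (VH : {set 'I_n}) (EH : {set edge n}), obstruction E VH EH).

Definition Pprop (D : {set edge n}) (s : seq (edge n)) :=
  forall x f S, x \in s -> f \in E -> f \notin D -> index x s <= index f s ->
    cross x f -> isJ E x f S ->
    exists h, in_induced E S h && ((h \in D) || (index h s < index x s)).

Lemma pick_e (R : {set edge n}) : R \subset E -> R != set0 ->
  exists e, e \in R /\ forall f, f \in R -> cross e f ->
     ~ (forall S, isJ E e f S -> induced_sub E S setT R).
Proof.
move=> RE R0; apply: NNPP => H; apply: noobs; exists setT, R.
split; first by split=> // h _; rewrite !in_setT.
split=> // e eR; apply: NNPP => H2; apply: H; exists e; split=> // f fR cef H3.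
by apply: H2; exists f; split.
Qed.

Lemma build k : forall D, #|E :\: D| <= k ->
  exists s, (forall x, (x \in s) = (x \in E :\: D)) /\ Pprop D s.
Proof.
elim: k => [|k IH] D Hk.
  exists [::]; split; last by move=> x f S.
  move=> x; move: Hk; rewrite leqn0 cards_eq0 => /eqP ->; by rewrite in_set0.
case: (boolP (E :\: D == set0)) => [/eqP R0|R0].
  exists [::]; split; last by move=> x f S.
  by move=> x; rewrite R0 in_set0.
have [e [eR He]] := pick_e (subsetDl E D) R0.
have prop : #|E :\: (e |: D)| <= k.
  rewrite -ltnS; apply: leq_trans Hk; apply: proper_card; apply/properP; split.
    by apply/subsetP=> x; rewrite !inE negb_or -andbA => /and3P[_ -> ->].
  by exists e => //; rewrite !inE eqxx.
have [s' [s'E Ps']] := IH _ prop.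
exists (e :: s'); split.
  move=> x; rewrite in_cons s'E !inE.
  case: (eqVneq x e) => [->|xe] /=; first by move: eR; rewrite inE.
  by [].
move=> x f S xs fE fD ixf cxf JS.
move: xs; rewrite in_cons => /orP[/eqP xe|xs'].
  subst x.
  have fR : f \in E :\: D by rewrite inE fD.
  have nind := He f fR cxf.
  have [h /andP[hS hR]] : exists h, in_induced E S h && (h \notin E :\: D).
    apply: NNPP => H; apply: nind => S' JS'.
    rewrite (isJ_uniq JS JS'); split; first exact: subsetT.
    move=> h hS; apply: NNPP => hn; apply: H; exists h; rewrite hS /=.
    by apply/negP.
  exists h; rewrite hS /=; move: hS => /and3P[hE _ _].
  by move: hR; rewrite inE hE andbT negbK => ->.
case: (eqVneq x e) => [xe|xe].
  subst x.
  have nind := He f _ cxf.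
  have fR : f \in E :\: D by rewrite inE fD.
  have [h /andP[hS hR]] : exists h, in_induced E S h && (h \notin E :\: D).
    apply: NNPP => H; apply: (nind fR) => S' JS'.
    rewrite (isJ_uniq JS JS'); split; first exact: subsetT.
    move=> h hS; apply: NNPP => hn; apply: H; exists h; rewrite hS /=.
    by apply/negP.
  exists h; rewrite hS /=; move: hS => /and3P[hE _ _].
  by move: hR; rewrite inE hE andbT negbK => ->.
move: ixf; rewrite !index_cons_eq eq_sym (negbTE xe).
case: (eqVneq e f) => [ef|ef] //= ixf.
have fD' : f \notin e |: D by rewrite !inE negb_or fD eq_sym ef.
have [h /andP[hS hD]] := Ps' x f S xs' fE fD' ixf cxf JS.
exists h; rewrite hS /=.
case: (eqVneq e h) => [eh|eh]; first by rewrite orbT.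
move: hD; rewrite !inE (eq_sym h) (negbTE eh) /= => /orP[->//|hl].
by rewrite ?ltnS hl orbT.
Qed.

End Build.

Lemma min_exists n (E : {set edge n}) (le : rel (edge n)) :
  total_order_on E le -> forall l : seq (edge n), l != [::] -> {subset l <= E} ->
  exists2 m, m \in l & forall x, x \in l -> le m x.
Proof.
move=> [rf [_ [tr tot]]]; elim=> [//|a l IH] _ sub.
case: (eqVneq l [::]) => [->|l0].
  exists a; first exact: mem_head.
  by move=> x; rewrite inE => /eqP ->; apply: rf; apply: sub; exact: mem_head.
have sub' : {subset l <= E} by move=> x xl; apply: sub; rewrite inE xl orbT.
have [m ml Hm] := IH l0 sub'.
have aE : a \in E by apply: sub; exact: mem_head.
have mE : m \in E by apply: sub'.
case/orP: (tot a m aE mE) => [am|ma].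
  exists a; first exact: mem_head.
  move=> x; rewrite inE => /orP[/eqP->|xl]; first exact: rf.
  apply: tr am (Hm x xl) => //; exact: sub'.
exists m; first by rewrite inE ml orbT.
move=> x; rewrite inE => /orP[/eqP->//|xl]; exact: Hm.
Qed.

Theorem theoremA4 (n : nat) (E : {set edge n}) :
  simple_graph E -> crossing_closed E ->
  (upper_crossing_closed E <->
   ~ (exists (VH : {set 'I_n}) (EH : {set edge n}), obstruction E VH EH)).
Proof.
move=> _ cc; split.
  move=> [_ [le [to up]]] [VH [EH [[subE _] [EH0 ob]]]].
  have [m mEH Hm] : exists2 m, m \in enum EH & forall x, x \in enum EH -> le m x.
    apply: (min_exists to).
      by case: (set_0Vmem EH) EH0 => [->|[x xE]]; [rewrite eqxx | case: (enum EH) (mem_enum EH x) => //; rewrite xE].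
    by move=> x; rewrite mem_enum; apply: (subsetP subE).
  rewrite mem_enum in mEH.
  have [f [fEH cmf Hf]] := ob m mEH.
  have mE := subsetP subE _ mEH; have fE := subsetP subE _ fEH.
  have [S JS] := cc m f mE fE cmf.
  have [h [hS /andP[hm hnm] _]] := up m f mE fE cmf S JS.
  have [_ ind] := Hf S JS.
  have hEH := ind h hS.
  have hE : h \in E by move: hS => /and3P[].
  move: to => [_ [anti _]].
  by move: hnm; rewrite (anti h m hE mE hm (Hm h _)) ?eqxx // mem_enum.
move=> noobs.
have [s [sE Ps]] := build noobs (leqnn #|E :\: set0|).
have sE' : forall x, (x \in s) = (x \in E) by move=> x; rewrite sE setD0.
split=> //.
exists (fun x y => index x s <= index y s); split.
  split=> //; split.
    move=> e f eE fE ef fe.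
    have eq : index e s = index f s by apply/eqP; rewrite eqn_leq ef fe.
    have es : e \in s by rewrite sE'.
    have fs : f \in s by rewrite sE'.
    by rewrite -(nth_index e es) eq nth_index.
  split; first by move=> e f g _ _ _; apply: leq_trans.
  by move=> e f _ _; apply: leq_total.
move=> e f eE fE cef S JS.
have key : forall x y, x \in E -> y \in E -> index x s <= index y s -> cross x y ->
    isJ E x y S -> exists h, in_induced E S h && (index h s < index x s).
  move=> x y xE yE ixy cxy J.
  have xs : x \in s by rewrite sE'.
  have yD : y \notin set0 by rewrite in_set0.
  have [h /andP[hS hD]] := Ps x y S xs yE yD ixy cxy J.
  by exists h; move: hD; rewrite in_set0 /= => ->; rewrite hS.
have fin : forall h, in_induced E S h -> index h s < index e s -> index h s < index f s ->
    exists h, [/\ in_induced E S h, (index h s <= index e s) && (h != e) &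
                 (index h s <= index f s) && (h != f)].
  move=> h hS he hf; exists h; split=> //.
    by rewrite ltnW //=; apply/eqP=> E'; move: he; rewrite E' ltnn.
  by rewrite ltnW //=; apply/eqP=> E'; move: hf; rewrite E' ltnn.
case: (leqP (index e s) (index f s)) => ief.
  have [h /andP[hS hl]] := key e f eE fE ief cef JS.
  by apply: (fin h hS hl); apply: leq_trans ief.
have cfe : cross f e by rewrite cross_sym.
have [h /andP[hS hl]] := key f e fE eE (ltnW ief) cfe (isJ_sym JS).
by apply: (fin h hS) => //; apply: ltn_trans ief.
Qed.
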